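(* Let $K$ be a precubical set. For any $p$-cube $x$ of $\omega\mathcal{L}(K)$ with $p\geq0$, there exist a $p$-cube $y$ of $K\subset\omega\mathcal{L}(K)$ and a map $\mu\in\widehat{\square}([p],[p])$ such that $x=\mu^*(y)$, where $\mu^*:\mathcal{L}(K)_p\to\mathcal{L}(K)_p$ is the image of $\mu$ under the presheaf $\mathcal{L}(K)$.
   Context: $[0]=\{()\}$, $[n]=\{0,1\}^n$ ($n\ge1$) with the product order. Face maps $\delta_i^\alpha:[n-1]\to[n]$ insert $\alpha\in\{0,1\}$ at position $i$; $\square$ is the category with objects $[n]$, $n\ge0$, generated by face maps; its presheaves are precubical sets. A map $[m]\to[n]$ is adjacency-preserving if strictly increasing and it sends pairs at Hamming distance $1$ to pairs at Hamming distance $1$; $\widehat\square$ is the category with objects $[n]$ and all adjacency-preserving maps (it contains $\square$); its presheaves are transverse symmetric precubical sets. $\omega$ is the restriction functor along $\square\subset\widehat\square$ and $\mathcal L$ its left adjoint. The unit $K\to\omega\mathcal L(K)$ is an injective map of presheaves, through which $K$ is regarded as a subobject of $\omega\mathcal L(K)$; $\omega\mathcal L(K)_p=\mathcal L(K)_p$. *)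

(* Defs.v *)
From HB Require Import structures.
From mathcomp Require Import all_boot.
Set Implicit Arguments. Unset Strict Implicit. Unset Printing Implicit Defensive.

(* The object [n] = {0,1}^n of the cube categories (for n = 0 it is a singleton). *)
Definition cube (n : nat) : finType := {ffun 'I_n -> bool}.

Definition cle n (x y : cube n) : bool := [forall i, x i ==> y i].
Definition clt n (x y : cube n) : bool := (x != y) && cle x y.
Definition hdist n (x y : cube n) : nat := #|[set i | x i != y i]|.

Definition adjb m n (f : {ffun cube m -> cube n}) : bool :=
  [forall x, forall y,
     (clt x y ==> clt (f x) (f y)) && ((hdist x y == 1) ==> (hdist (f x) (f y) == 1))].

(* the hom-sets of the category \widehat\square *)
Definition hhom m n := {f : {ffun cube m -> cube n} | adjb f}.

Lemma adjb_id n : adjb [ffun x : cube n => x].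
Proof. by apply/forallP => x; apply/forallP => y; rewrite !ffunE !implybb. Qed.

Lemma adjb_comp m n k (f : {ffun cube n -> cube k}) (g : {ffun cube m -> cube n}) :
  adjb f -> adjb g -> adjb [ffun x => f (g x)].
Proof.
move=> /forallP hf /forallP hg; apply/forallP => x; apply/forallP => y.
rewrite !ffunE; move/forallP: (hg x) => /(_ y) /andP [h1 h2].
apply/andP; split; apply/implyP => h.
- by move/forallP: (hf (g x)) => /(_ (g y)) /andP [+ _] => /implyP; apply; apply: (implyP h1).
- by move/forallP: (hf (g x)) => /(_ (g y)) /andP [_ +] => /implyP; apply; apply: (implyP h2).
Qed.

Definition hid n : hhom n n := exist (@adjb n n) _ (adjb_id n).
Definition hcomp m n k (f : hhom n k) (g : hhom m n) : hhom m k :=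
  exist (@adjb m k) _ (adjb_comp (proj2_sig f) (proj2_sig g)).

Definition delta n (i : 'I_n.+1) (a : bool) (x : cube n) : cube n.+1 :=
  [ffun j => if unlift i j is Some k then x k else a].

Lemma delta_set n (i : 'I_n.+1) a (x y : cube n) :
  [set j | delta i a x j != delta i a y j] = lift i @: [set k | x k != y k].
Proof.
apply/setP => j; rewrite inE !ffunE; case: unliftP => [k ->|->].
- by rewrite mem_imset ?inE //; exact: lift_inj.
- rewrite eqxx /=; apply/esym/imsetP => -[k _] e; by have := neq_lift i k; rewrite -e eqxx.
Qed.

Lemma adjb_delta n (i : 'I_n.+1) a : adjb [ffun x => delta i a x].
Proof.
apply/forallP => x; apply/forallP => y; rewrite !ffunE /hdist delta_set.
rewrite (card_imset _ (@lift_inj _ i)) implybb andbT.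
apply/implyP => /andP [nxy /forallP le]; apply/andP; split.
- apply: contra nxy => /eqP e; apply/eqP/ffunP => k.
  by have := congr1 (fun f : cube n.+1 => f (lift i k)) e; rewrite !ffunE liftK.
- apply/forallP => j; rewrite !ffunE; case: unlift => [k|]; [exact: le | exact: implybb].
Qed.

Definition hdelta n (i : 'I_n.+1) (a : bool) : hhom n n.+1 :=
  exist (@adjb n n.+1) _ (adjb_delta i a).

(* Precubical sets = presheaves on \square, presented by face operators
   d_i^a : K_{n+1} -> K_n subject to every relation holding between composites
   of two face maps in \square (these generate all relations of \square;
   they are the cubical identities). *)
Record precubical := Precubical {
  pc :> nat -> Type;
  face : forall n, 'I_n.+1 -> bool -> pc n.+1 -> pc n;
  face_rel : forall n (i i' : 'I_n.+1) (j j' : 'I_n.+2) (a a' b b' : bool),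
    [ffun v => delta j b (delta i a v)] = [ffun v => delta j' b' (delta i' a' v)] ->
    forall x : pc n.+2, face i a (face j b x) = face i' a' (face j' b' x)
}.

Definition pc_map (K K' : precubical) (f : forall n, K n -> K' n) : Prop :=
  forall n (i : 'I_n.+1) (a : bool) (x : K n.+1), f n (face i a x) = face i a (f n.+1 x).

Record hpresheaf := HPresheaf {
  hp :> nat -> Type;
  act : forall m n, hhom m n -> hp n -> hp m;
  act_id : forall n (x : hp n), act (hid n) x = x;
  act_comp : forall m n k (f : hhom n k) (g : hhom m n) (x : hp k),
    act (hcomp f g) x = act g (act f x)
}.

Definition hp_map (L M : hpresheaf) (f : forall n, L n -> M n) : Prop :=
  forall m n (g : hhom m n) (x : L n), f m (act g x) = act g (f n x).

Definition omega_face (L : hpresheaf) n (i : 'I_n.+1) (a : bool) (x : L n.+1) : L n :=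
  act (hdelta i a) x.

Lemma omega_face_rel (L : hpresheaf) n (i i' : 'I_n.+1) (j j' : 'I_n.+2) (a a' b b' : bool) :
    [ffun v => delta j b (delta i a v)] = [ffun v => delta j' b' (delta i' a' v)] ->
    forall x : L n.+2, omega_face i a (omega_face j b x) = omega_face i' a' (omega_face j' b' x).
Proof.
move=> e x; rewrite /omega_face -!act_comp; congr (act _ x).
apply: val_inj => /=; apply/ffunP => v; rewrite !ffunE.
by have := congr1 (fun f : {ffun cube n -> cube n.+2} => f v) e; rewrite !ffunE.
Qed.

Definition omega (L : hpresheaf) : precubical :=
  Precubical (@omega_face_rel L).

(* (L, eta) is a left adjoint of omega at K: eta : K -> omega L is the universal
   arrow (unit) from K to omega. *)
Definition is_omega_universal (K : precubical) (L : hpresheaf)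
    (eta : forall n, K n -> L n) : Prop :=
  pc_map (K' := omega L) eta /\
  forall (M : hpresheaf) (phi : forall n, K n -> M n),
    pc_map (K' := omega M) phi ->
    (exists psi : forall n, L n -> M n,
        hp_map psi /\ forall n (y : K n), psi n (eta n y) = phi n y) /\
    (forall psi1 psi2 : forall n, L n -> M n,
        hp_map psi1 -> (forall n (y : K n), psi1 n (eta n y) = phi n y) ->
        hp_map psi2 -> (forall n (y : K n), psi2 n (eta n y) = phi n y) ->
        forall n (z : L n), psi1 n z = psi2 n z).

(* Main.v *)
From Stdlib Require Import ProofIrrelevance.
Require Import Defs.
From mathcomp Require Import all_boot.
Set Implicit Arguments. Unset Strict Implicit. Unset Printing Implicit Defensive.

Lemma sig_eq (A : Type) (Q : A -> Prop) (u v : sig Q) : proj1_sig u = proj1_sig v -> u = v.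
Proof. case: u => u hu; case: v => v hv /= e; subst v; f_equal; apply: proof_irrelevance. Qed.

Lemma adjb_prop m n (f : {ffun cube m -> cube n}) x y : adjb f ->
  (clt x y -> clt (f x) (f y)) /\ (hdist x y = 1 -> hdist (f x) (f y) = 1).
Proof.
move=> /forallP /(_ x) /forallP /(_ y) /andP [h1 h2]; split.
- by move/(implyP h1).
- by move=> e; apply/eqP; apply: (implyP h2); rewrite e.
Qed.

Lemma cle_refl n (x : cube n) : cle x x.
Proof. by apply/forallP => i; rewrite implybb. Qed.

Lemma cle_trans n (x y z : cube n) : cle x y -> cle y z -> cle x z.
Proof.
move=> /forallP h1 /forallP h2; apply/forallP => i.
by move: (h1 i) (h2 i); case: (x i); case: (y i); case: (z i).
Qed.

Lemma hdist_add n (u v w : cube n): cle u v -> cle v w -> hdist u w = hdist u v + hdist v w.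
Proof.
move=> /forallP uv /forallP vw; rewrite /hdist.
have -> : [set i | u i != w i] = [set i | u i != v i] :|: [set i | v i != w i].
  apply/setP => i; rewrite !inE; move: (uv i) (vw i).
  by case: (u i); case: (v i); case: (w i).
rewrite -cardsUI.
have -> : [set i | u i != v i] :&: [set i | v i != w i] = set0.
  apply/setP=> i; rewrite !inE; move: (uv i) (vw i).
  by case: (u i); case: (v i); case: (w i).
by rewrite cards0 addn0.
Qed.

Lemma hdist_le n (u v : cube n) : hdist u v <= n.
Proof. by rewrite /hdist; apply: leq_trans (max_card _) _; rewrite card_ord. Qed.

Lemma hdist0 n (u : cube n) : hdist u u = 0.
Proof. by rewrite /hdist; apply/eqP; rewrite cards_eq0; apply/eqP/setP => i; rewrite !inE eqxx. Qed.

Definition ch n k : cube n := [ffun i : 'I_n => i < k].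

Lemma ch_step n k : k < n -> clt (ch n k) (ch n k.+1) /\ hdist (ch n k) (ch n k.+1) = 1.
Proof.
move=> kn; split.
- apply/andP; split.
  + apply/eqP => e; have := congr1 (fun f : cube n => f (Ordinal kn)) e.
    by rewrite !ffunE /= ltnn ltnSn.
  + by apply/forallP => i; rewrite !ffunE; apply/implyP => h; apply: ltnW.
- rewrite /hdist (_ : [set i | _] = [set Ordinal kn]) ?cards1 //.
  apply/setP => i; rewrite !inE !ffunE ltnS.
  rewrite -val_eqE /=.
  by case: ltngtP.
Qed.

Lemma chain_dist n m (f : hhom n m) k : k <= n ->
  hdist (val f (ch n 0)) (val f (ch n k)) = k /\ cle (val f (ch n 0)) (val f (ch n k)).
Proof.
elim: k => [|k IH] kn; first by rewrite hdist0 cle_refl.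
have [IH1 IH2] := IH (ltnW kn).
have [s1 s2] := ch_step kn.
have [a1 a2] := adjb_prop (ch n k) (ch n k.+1) (proj2_sig f).
have c1 : cle (val f (ch n k)) (val f (ch n k.+1)) by case/andP: (a1 s1).
split; last exact: cle_trans c1.
by rewrite (hdist_add IH2 c1) IH1 (a2 s2) addn1.
Qed.

Lemma le_dim n m (f : hhom n m) : n <= m.
Proof. have [e _] := chain_dist f (leqnn n); rewrite -[X in X <= _]e; apply: hdist_le. Qed.

Lemma ch_bounds n (x : cube n) : cle (ch n 0) x /\ cle x (ch n n).
Proof.
by split; apply/forallP => i; rewrite !ffunE ?ltn_ord ?implybT.
Qed.

Lemma const_coord n m (f : hhom n m) : n < m ->
  exists j, forall x, val f x j = val f (ch n 0) j.
Proof.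
move=> nm.
have [d1 d2] := chain_dist f (leqnn n).
have : [exists j, val f (ch n 0) j == val f (ch n n) j].
  case: (boolP [exists j, val f (ch n 0) j == val f (ch n n) j]) => // /existsPn H; exfalso.
  move: d1; rewrite /hdist (_ : [set i | _] = setT); last by apply/setP => i; rewrite !inE H.
  by rewrite cardsT card_ord => e; move: nm; rewrite e ltnn.
case/existsP => j /eqP ej; exists j => x.
have [b1 b2] := ch_bounds x.
have lo : cle (val f (ch n 0)) (val f x).
  case: (eqVneq (ch n 0) x) => [<-|ne]; first exact: cle_refl.
  have [h _] := adjb_prop (ch n 0) x (proj2_sig f).
  by case/andP: (h (introT andP (conj ne b1))).
have hi : cle (val f x) (val f (ch n n)).
  case: (eqVneq x (ch n n)) => [->|ne]; first exact: cle_refl.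
  have [h _] := adjb_prop x (ch n n) (proj2_sig f).
  by case/andP: (h (introT andP (conj ne b2))).
move/forallP: lo => /(_ j); move/forallP: hi => /(_ j); rewrite -ej.
by case: (val f x j); case: (val f (ch n 0) j).
Qed.

Lemma delta_cle m (j : 'I_m.+1) a (u v : cube m) : cle (delta j a u) (delta j a v) = cle u v.
Proof.
apply/forallP/forallP => H k.
- by move: (H (lift j k)); rewrite !ffunE liftK.
- by rewrite !ffunE; case: unlift => // ; rewrite implybb.
Qed.

Lemma delta_eq m (j : 'I_m.+1) a (u v : cube m) : (delta j a u == delta j a v) = (u == v).
Proof.
apply/eqP/eqP => [e|->] //; apply/ffunP => k.
by have := congr1 (fun f : cube m.+1 => f (lift j k)) e; rewrite !ffunE liftK.
Qed.

Lemma delta_clt m (j : 'I_m.+1) a (u v : cube m) : clt (delta j a u) (delta j a v) = clt u v.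
Proof. by rewrite /clt delta_cle delta_eq. Qed.

Lemma delta_hdist m (j : 'I_m.+1) a (u v : cube m) : hdist (delta j a u) (delta j a v) = hdist u v.
Proof. by rewrite /hdist delta_set (card_imset _ (@lift_inj _ j)). Qed.

Definition restr n m (j : 'I_m.+1) (F : {ffun cube n -> cube m.+1}) : {ffun cube n -> cube m} :=
  [ffun x => [ffun k => F x (lift j k)]].

Lemma delta_restr n m (j : 'I_m.+1) a (F : {ffun cube n -> cube m.+1}) :
  (forall x, F x j = a) -> forall x, delta j a (restr j F x) = F x.
Proof.
move=> H x; apply/ffunP => k; rewrite !ffunE; case: unliftP => [k' ->|->].
- by rewrite !ffunE.
- by rewrite H.
Qed.

Lemma adjb_restr n m (j : 'I_m.+1) a (F : {ffun cube n -> cube m.+1}) :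
  (forall x, F x j = a) -> adjb F -> adjb (restr j F).
Proof.
move=> H /forallP hF; apply/forallP => x; apply/forallP => y.
move/forallP: (hF x) => /(_ y).
by rewrite -(delta_restr H x) -(delta_restr H y) delta_clt delta_hdist.
Qed.

Inductive facial n : forall m, hhom n m -> Prop :=
| fac_id : facial (hid n)
| fac_step m (d : hhom n m) (i : 'I_m.+1) a : facial d -> facial (hcomp (hdelta i a) d).

Lemma facial_eta (K : precubical) (L : hpresheaf) (eta : forall n, K n -> L n)
  (H : pc_map (K' := omega L) eta) n m (d : hhom n m) :
  facial d -> forall y : K m, exists y', act d (eta m y) = eta n y'.
Proof.
elim => [|m' d' i a _ IH] y; first by exists y; rewrite act_id.
rewrite act_comp.
have e := H m' i a y; simpl in e; rewrite /omega_face in e.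
rewrite -e; exact: IH.
Qed.

Lemma factor m : forall n (f : hhom n m), exists (d : hhom n m) (mu : hhom n n),
  facial d /\ forall x, val f x = val (hcomp d mu) x.
Proof.
elim: m => [|m IH] n f.
  have := le_dim f; rewrite leqn0 => /eqP en; subst n.
  by exists (hid 0), f; split; [constructor | move=> x; rewrite /= !ffunE].
case: (eqVneq n m.+1) => [en|ne].
  subst n; by exists (hid m.+1), f; split; [constructor | move=> x; rewrite /= !ffunE].
have lt : n < m.+1 by rewrite ltn_neqAle ne le_dim.
have [j Hj] := const_coord f lt.
pose f' : hhom n m := exist (@adjb n m) _ (adjb_restr Hj (proj2_sig f)).
have [d [mu [fd hd]]] := IH n f'.
exists (hcomp (hdelta j (val f (ch n 0) j)) d), mu; split; first by constructor.
move=> x; rewrite /= !ffunE.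
have e : restr j (val f) x = val d (val mu x).
  have := hd x; rewrite /=. by rewrite [in X in _ = X -> _]ffunE.
by rewrite -[sval d _]e (delta_restr Hj).
Qed.

Definition P (K : precubical) (L : hpresheaf) (eta : forall n, K n -> L n) p (x : L p) : Prop :=
  exists (y : K p) (mu : hhom p p), x = act mu (eta p y).

Lemma P_closed (K : precubical) (L : hpresheaf) (eta : forall n, K n -> L n)
  (H : pc_map (K' := omega L) eta) m n (g : hhom m n) (x : L n) :
  P eta x -> P eta (act g x).
Proof.
case=> y [mu ->]; rewrite -act_comp.
have [d [mu' [fd hd]]] := factor (hcomp mu g).
have -> : hcomp mu g = hcomp d mu' by apply: val_inj; apply/ffunP.
rewrite act_comp.
have [y' ->] := facial_eta H fd y.
by exists y', mu'.
Qed.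

Definition Mact (K : precubical) (L : hpresheaf) (eta : forall n, K n -> L n)
  (H : pc_map (K' := omega L) eta) m n (g : hhom m n) (u : {x : L n | P eta x}) :
  {x : L m | P eta x} := exist _ (act g (proj1_sig u)) (P_closed H g (proj2_sig u)).

Definition Mpre (K : precubical) (L : hpresheaf) (eta : forall n, K n -> L n)
  (H : pc_map (K' := omega L) eta) : hpresheaf :=
  {| hp := fun n => {x : L n | P eta x};
     act := @Mact K L eta H;
     act_id := fun n u => sig_eq (u := Mact H (hid n) u) (v := u) (act_id (proj1_sig u));
     act_comp := fun m n k f g u => sig_eq (u := Mact H (hcomp f g) u) (v := Mact H g (Mact H f u)) (act_comp f g (proj1_sig u)) |}.

Unset Implicit Arguments.
Theorem proposition8p3 (K : precubical) (L : hpresheaf) (eta : forall n, K n -> L n) :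
  is_omega_universal eta ->
  forall (p : nat) (x : L p), exists (y : K p) (mu : hhom p p), x = act mu (eta p y).
Proof.
move=> [H U] p x.
pose M := Mpre H.
pose eta' : forall n, K n -> M n := fun n y =>
  exist _ (eta n y) (ex_intro _ y (ex_intro _ (hid n) (esym (act_id (eta n y))))).
have Heta' : pc_map (K' := omega M) eta'.
  move=> n i a y; apply: sig_eq => /=.
  by have := H n i a y.
have [[psi [hpsi epsi]] _] := U M eta' Heta'.
have [_ uniq] := U L eta H.
have e : proj1_sig (psi p x) = x.
  apply: (uniq (fun n z => proj1_sig (psi n z)) (fun n z => z)).
  - move=> m n g z /=; by rewrite hpsi.
  - by move=> n y /=; rewrite epsi.
  - by [].
  - by [].
rewrite -e; exact: (proj2_sig (psi p x)).
Qed.
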